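(* Let $n$ be a positive integer, and suppose there exists a hexagonal permutation $\pi$ with $n$ dots. Then $n$ is odd, and the dots of $\pi$ are contained in a Lee sphere of radius $(n-1)/2$.
   Context: Model the cells (hexagons) of the hexagonal grid by $\mathbb{Z}^2$, where cell $(x,y)$ is adjacent to the six cells $(x\pm1,y)$, $(x,y\pm1)$, $(x+1,y+1)$, $(x-1,y-1)$. The ''rows'' of the hexagonal grid in its three natural directions are the sets $\{y=c\}$, $\{x=c\}$ and $\{x-y=c\}$ for $c\in\mathbb{Z}$; two rows of the same direction are consecutive if their constants $c$ differ by $1$. A set of dots is a finite nonempty set of cells. A hexagonal permutation with $n$ dots is a set $\pi$ of $n$ cells such that, for each of the three directions, the rows of that direction containing a dot of $\pi$ are exactly $n$ consecutive rows, and each of these rows contains exactly one dot of $\pi$. The distance between two cells is the length of a shortest path of successively adjacent cells joining them; for cells $(x,y)$ and $(a,b)$ it equals $\max(|x-a|,|y-b|,|(x-a)-(y-b)|)$. A Lee sphere of radius $r$ with centre $(a,b)$ is the set of all cells at distance at most $r$ from $(a,b)$. *)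

(* Defs.v *)
From Stdlib Require Import ZArith List Lia.
Open Scope Z_scope.

Definition cell := (Z * Z)%type.

(* The three row directions: row constant of a cell in each direction. *)
Definition rowY (p : cell) : Z := snd p.
Definition rowX (p : cell) : Z := fst p.
Definition rowD (p : cell) : Z := fst p - snd p.

Definition is_dot_set (n : nat) (pi : list cell) : Prop :=
  NoDup pi /\ length pi = n.

Definition rows_ok (f : cell -> Z) (n : nat) (pi : list cell) : Prop :=
  exists c : Z,
    (forall k : Z, (exists p, In p pi /\ f p = k) <-> (c <= k < c + Z.of_nat n)) /\
    (forall k : Z, c <= k < c + Z.of_nat n ->
       forall p q, In p pi -> In q pi -> f p = k -> f q = k -> p = q).

Definition hex_perm (n : nat) (pi : list cell) : Prop :=
  is_dot_set n pi /\ rows_ok rowY n pi /\ rows_ok rowX n pi /\ rows_ok rowD n pi.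

Definition hex_dist (p q : cell) : Z :=
  Z.max (Z.abs (fst p - fst q))
        (Z.max (Z.abs (snd p - snd q))
               (Z.abs ((fst p - fst q) - (snd p - snd q)))).

Definition lee_sphere (r : Z) (ctr : cell) (p : cell) : Prop :=
  hex_dist p ctr <= r.

(* Main.v *)
Require Import Defs.
From Stdlib Require Import ZArith List Lia Permutation.
Open Scope Z_scope.

Definition sumZ (l : list Z) : Z := fold_right Z.add 0 l.

Lemma sumZ_app l1 l2 : sumZ (l1 ++ l2) = sumZ l1 + sumZ l2.
Proof. induction l1; simpl; lia. Qed.

Lemma sumZ_perm l1 l2 : Permutation l1 l2 -> sumZ l1 = sumZ l2.
Proof. induction 1; simpl; lia. Qed.

Definition Tri (n : nat) := sumZ (map Z.of_nat (seq 0 n)).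

Lemma sum_interval_gen c n s :
  sumZ (map (fun i => c + Z.of_nat i) (seq s n)) = Z.of_nat n * c + sumZ (map Z.of_nat (seq s n)).
Proof. revert s; induction n; intros s; [simpl; lia|]. cbn [seq map sumZ fold_right]. fold sumZ. rewrite IHn. unfold sumZ in *. rewrite Nat2Z.inj_succ. lia. Qed.

Lemma T2 n : 2 * Tri n = Z.of_nat n * (Z.of_nat n - 1).
Proof.
  unfold Tri; induction n; [simpl; lia|].
  rewrite seq_S, map_app, sumZ_app. cbn [map sumZ fold_right]. rewrite Nat2Z.inj_succ. lia.
Qed.

Lemma sum_diff (pi : list cell) :
  sumZ (map rowX pi) - sumZ (map rowY pi) = sumZ (map rowD pi).
Proof. induction pi; simpl; [lia|]. unfold rowD, rowX, rowY in *. lia. Qed.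

Lemma rows_sum f n pi : NoDup pi -> rows_ok f n pi ->
  exists c, sumZ (map f pi) = Z.of_nat n * c + Tri n /\
    (forall p, In p pi -> c <= f p < c + Z.of_nat n).
Proof.
  intros Hnd [c [Hiff Huniq]]. exists c. split.
  2:{ intros p Hp. apply Hiff. eauto. }
  unfold Tri. rewrite <- sum_interval_gen. apply sumZ_perm.
  apply NoDup_Permutation.
  - apply NoDup_map_NoDup_ForallPairs; auto.
    intros p q Hp Hq Hpq. apply (Huniq (f p)); auto. apply Hiff; eauto.
  - apply NoDup_map_NoDup_ForallPairs; [|apply seq_NoDup].
    intros a b _ _ H. lia.
  - intros k. rewrite !in_map_iff. split.
    + intros [p [Hp1 Hp2]].
      assert (Hk : c <= k < c + Z.of_nat n) by (apply Hiff; eauto).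
      exists (Z.to_nat (k - c)). split; [lia|]. apply in_seq. lia.
    + intros [i [Hi1 Hi2]]. apply in_seq in Hi2.
      assert (Hk : c <= k < c + Z.of_nat n) by lia.
      apply Hiff in Hk. destruct Hk as [p [Hp1 Hp2]]. eauto.
Qed.

Theorem theorem1 (n : nat) (pi : list cell) :
  (0 < n)%nat -> hex_perm n pi ->
  Nat.Odd n /\
  exists ctr : cell, forall p, In p pi -> lee_sphere ((Z.of_nat n - 1) / 2) ctr p.
Proof.
  intros Hn [[Hnd Hlen] [HY [HX HD]]].
  destruct (rows_sum _ _ _ Hnd HY) as [b [Sb Rb]].
  destruct (rows_sum _ _ _ Hnd HX) as [a [Sa Ra]].
  destruct (rows_sum _ _ _ Hnd HD) as [c [Sc Rc]].
  pose proof (sum_diff pi) as Hd. pose proof (T2 n) as HT.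
  assert (Hm : Z.of_nat n - 1 = 2 * (a - b - c)).
  { assert (Z.of_nat n * (Z.of_nat n - 1) = Z.of_nat n * (2 * (a - b - c))) by nia.
    apply Z.mul_cancel_l in H; lia. }
  split.
  - exists (Z.to_nat (a - b - c)). clear - Hm Hn. apply Nat2Z.inj_lt in Hn. simpl in Hn. assert (0 <= a - b - c) by lia. apply Nat2Z.inj. rewrite Nat2Z.inj_add, Nat2Z.inj_mul, Z2Nat.id by lia. lia.
  - set (m := a - b - c) in *.
    replace ((Z.of_nat n - 1) / 2) with m.
    2:{ rewrite Hm. rewrite Z.mul_comm, Z.div_mul; lia. }
    exists (a + m, b + m). intros p Hp.
    specialize (Ra p Hp). specialize (Rb p Hp). specialize (Rc p Hp).
    destruct p as [x y]. unfold lee_sphere, hex_dist, rowX, rowY, rowD in *; cbn [fst snd] in *.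
    repeat apply Z.max_lub; apply Z.abs_le; lia.
Qed.
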